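(* Suppose $\nu_1$ and $\nu_2$ are special isomorphisms on $\mathcal{H}$. Then the following are equivalent: (1) $\nu_1=\nu_2$; (2) $\nu_1^{-1}(W\times 1) = \nu_2^{-1}(W\times 1)$; (3) there exists $s\in \mathcal{S}$ such that $\nu_2= s\circ \nu_1$.
   Context: Let $p$ be an odd prime. Let $\mathcal{H}$ be a Heisenberg $p$-group, i.e. a group isomorphic to $W_0\boxtimes C$ for some nondegenerate finite symplectic space $W_0$ over $\mathbb{F}_p$ and cyclic group $C$ of order $p$ (the set $W_0\times C$ with multiplication $(w_1,z_1)(w_2,z_2)=(w_1+w_2,z_1+z_2+\tfrac12\langle w_1,w_2\rangle)$). Let $\mathcal{Z}$ be the center of $\mathcal{H}$ and $W=\mathcal{H}/\mathcal{Z}$. The commutator map $(h_1,h_2)\mapsto [h_1,h_2]=h_1h_2h_1^{-1}h_2^{-1}$ induces a bimultiplicative nondegenerate $\mathcal{Z}$-valued symplectic form $\langle h_1\mathcal{Z},h_2\mathcal{Z}\rangle=[h_1,h_2]$ on $W$. Let $W^\sharp=W\boxtimes\mathcal{Z}$ be the set $W\times\mathcal{Z}$ with the analogous Heisenberg group law built from this form. A special isomorphism on $\mathcal{H}$ is a homomorphism $\nu:\mathcal{H}\to W^\sharp$ which restricts to the identity on $\mathcal{Z}$ and induces the identity map $W\to W$ modulo the centers, i.e. making the diagram of the exact sequences $1\to\mathcal{Z}\to\mathcal{H}\to W\to 1$ and $1\to\mathcal{Z}\to W^\sharp\to W\to 1$ commute. Let $\mathcal{S}=\mathrm{Sp}(W)$,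 acting on $W^\sharp$ by $s\cdot(w,z)=(s w,z)$; $W\times 1$ denotes the subset $\{(w,1):w\in W\}$ of $W^\sharp$. *)

(* Defs.v *)
From HB Require Import structures.
From mathcomp Require Import all_boot all_order all_algebra all_fingroup all_solvable.
Set Implicit Arguments. Unset Strict Implicit. Unset Printing Implicit Defensive.
Import GRing.Theory.
Local Open Scope ring_scope.

(* W0 = 'rV['F_p]_n with the bilinear form <u,v> = u J v^T, where J is an
   invertible skew-symmetric matrix (i.e. a nondegenerate symplectic form;
   skew-symmetric = alternating since p is odd).  C = 'F_p (additive).       *)
Definition heis_form (p n : nat) (J : 'M['F_p]_n) (u v : 'rV['F_p]_n) : 'F_p :=
  ((u *m J *m v^T) 0 0)%R.

Definition heis_mul (p n : nat) (J : 'M['F_p]_n)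
    (a b : 'rV['F_p]_n * 'F_p) : 'rV['F_p]_n * 'F_p :=
  (a.1 + b.1, a.2 + b.2 + (2%:R)^-1 * heis_form J a.1 b.1)%R.

Definition symplectic_matrix (p n : nat) (J : 'M['F_p]_n) : Prop :=
  J^T = (- J)%R /\ J \in unitmx.

Definition heis_iso (gT : finGroupType) (H : {set gT}) (p n : nat)
    (J : 'M['F_p]_n) : Prop :=
  exists f : gT -> 'rV['F_p]_n * 'F_p,
    [/\ {in H &, injective f},
        (forall y, exists2 x, x \in H & f x = y) &
        {in H &, forall x y, f (x * y)%g = heis_mul J (f x) (f y)}].

Definition heisenberg_pgroup (gT : finGroupType) (H : {set gT}) (p : nat) : Prop :=
  exists n (J : 'M['F_p]_n), symplectic_matrix J /\ heis_iso H J.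

Section Sharp.
Variables (gT : finGroupType) (H : {group gT}).

Local Notation Z := 'Z(H)%g.
Local Notation Wt := (coset_of 'Z(H)%g).

(* paper's commutator h1 h2 h1^-1 h2^-1 *)
Definition pcomm (x y : gT) : gT := (x * y * x^-1 * y^-1)%g.

Definition Wform (u v : Wt) : gT := pcomm (repr u) (repr v).

(* square root in the cyclic group Z of odd order: z^(1/2) = z^((|Z|+1)/2) *)
Definition zhalf (z : gT) : gT := (z ^+ (#|Z|.+1)./2)%g.

(* group law of W^sharp = W ⊠ Z (written multiplicatively) *)
Definition sharp_mul (a b : Wt * gT) : Wt * gT :=
  ((a.1 * b.1)%g, (a.2 * b.2 * zhalf (Wform a.1 b.1))%g).

Definition special_iso (nu : gT -> Wt * gT) : Prop :=
  [/\ {in H, forall x, (nu x).2 \in Z},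
      {in H &, forall x y, nu (x * y)%g = sharp_mul (nu x) (nu y)},
      {in Z, forall z, nu z = (1%g, z)} &
      {in H, forall x, (nu x).1 = coset Z x}].

Definition Sp_W (s : {perm Wt}) : Prop :=
  s \in Aut (H / Z)%g /\ {in (H / Z)%g &, forall u v, Wform (s u) (s v) = Wform u v}.

Definition pre_W1 (nu : gT -> Wt * gT) : {set gT} :=
  [set x in H | (nu x).2 == 1%g].

End Sharp.

Arguments special_iso {gT} H nu.
Arguments Sp_W {gT} H s.
Arguments pre_W1 {gT} H nu.
Arguments Wform {gT} H u v.
Arguments sharp_mul {gT} H a b.

(* Main.v *)
Require Import Defs.
From HB Require Import structures.
From mathcomp Require Import all_boot all_order all_algebra all_fingroup all_solvable.

Lemma phi_mulZ {gT : finGroupType} {H : {group gT}} {nu : gT -> coset_of 'Z(H)%g * gT} :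
  special_iso H nu -> forall {x z}, x \in H -> z \in 'Z(H)%g ->
  (nu (x * z)%g).2 = ((nu x).2 * z)%g.
Proof.
case=> _ Hm Hz _ x z xH zZ.
have zH : z \in H by move: zZ; rewrite inE => /andP[].
rewrite Hm // (Hz z zZ) /sharp_mul /= /Wform /pcomm.
rewrite repr_coset1.
by rewrite /zhalf mulg1 invg1 mulg1 mulgV expg1n mulg1.
Qed.

Theorem lemma2p31 (gT : finGroupType) (H : {group gT}) (p : nat) :
  prime p -> odd p -> heisenberg_pgroup H p ->
  forall nu1 nu2 : gT -> coset_of 'Z(H)%g * gT,
    special_iso H nu1 -> special_iso H nu2 ->
    [<-> {in H, nu1 =1 nu2};
         pre_W1 H nu1 = pre_W1 H nu2;
         exists s : {perm coset_of 'Z(H)%g},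
           Sp_W H s /\ {in H, forall x, nu2 x = (s (nu1 x).1, (nu1 x).2)}].
Proof.
move=> _ _ _ nu1 nu2 S1 S2.
have eq1 : {in H, nu1 =1 nu2} -> exists s : {perm coset_of 'Z(H)%g},
           Sp_W H s /\ {in H, forall x, nu2 x = (s (nu1 x).1, (nu1 x).2)}.
  move=> E; exists 1%g; split.
    by split; [exact: group1 | move=> u v _ _; rewrite !perm1].
  by move=> x xH; rewrite perm1 -E //; case: (nu1 x).
tfae.
- by move=> E; apply/setP=> x; rewrite !inE; case xH: (x \in H) => //=; rewrite E.
- move=> E; apply: eq1 => x xH.
  have [Zv1 _ _ C1] := S1; have [Zv2 _ _ C2] := S2.
  set z := ((nu1 x).2)^-1%g.
  have zZ : z \in 'Z(H)%g by rewrite groupV Zv1.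
  have zH : z \in H by move: zZ; rewrite inE => /andP[].
  have : (x * z)%g \in pre_W1 H nu1.
    by rewrite inE groupM //= (phi_mulZ S1 xH zZ) mulgV.
  rewrite E inE => /andP[_]; rewrite (phi_mulZ S2 xH zZ) => /eqP e.
  have e2 : (nu2 x).2 = (nu1 x).2.
    by rewrite -(mulgK z (nu2 x).2) e mul1g /z invgK.
  by rewrite [nu1 x]surjective_pairing [nu2 x]surjective_pairing C1 // C2 // e2.
- case=> s [_ E] x xH.
  have [_ _ _ C1] := S1; have [_ _ _ C2] := S2.
  have e1 := C2 x xH; rewrite E //= in e1.
  rewrite [nu2 x]surjective_pairing [nu1 x]surjective_pairing E //= e1 C1 //.
Qed.
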